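(* Let $C$ be a sorting network on $n$ channels of depth $d$. Then there is a sorting network $N=L_1;\ldots;L_d$ on $n$ channels of the same depth $d$ whose last layer $L_d$ (i) only contains comparators between adjacent channels, i.e. of the form $(i,i+1)$, and (ii) does not contain two adjacent unused channels, i.e. there is no $i<n$ such that neither $i$ nor $i+1$ is used in $L_d$.
   Context: Channels are numbered $1,\ldots,n$. A comparator network of depth $d$ is a sequence $C=L_1;\ldots;L_d$ of layers; each layer is a set of comparators $(i,j)$ with $1\le i<j\le n$, each channel occurring in at most one comparator of a layer. An input $\bar x\in\{0,1\}^n$ propagates: $\bar x_0=\bar x$, and $\bar x_k$ is obtained from $\bar x_{k-1}$ by, for each $(i,j)\in L_k$, putting the minimum of the values at positions $i,j$ at position $i$ and the maximum at position $j$. The output is $C(\bar x)=\bar x_d$; $C$ is a sorting network if $C(\bar x)$ is sorted non-decreasingly for all $\bar x\in\{0,1\}^n$. A channel is used in a layer if it occurs in some comparator of that layer. *)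

(* Defs.v *)
From mathcomp Require Import all_boot.
Set Implicit Arguments. Unset Strict Implicit. Unset Printing Implicit Defensive.

(* Channels are 'I_n (channel k of the paper is the ordinal k-1).
   A comparator is a pair (i, j) of channels; a layer is a sequence of
   comparators; a comparator network is a sequence of layers. *)
Definition comparator n := ('I_n * 'I_n)%type.
Definition layer n := seq (comparator n).
Definition network n := seq (layer n).

Definition used n (L : layer n) (x : 'I_n) : bool :=
  has (fun c => (c.1 == x) || (c.2 == x)) L.

Definition wf_layer n (L : layer n) : bool :=
  all (fun c : comparator n => (c.1 < c.2)%N) L &&
  uniq (flatten [seq [:: c.1; c.2] | c : comparator n <- L]).

Definition wf_network n (C : network n) : bool := all (@wf_layer n) C.

Definition depth n (C : network n) : nat := size C.

(* apply one layer to a 0-1 input (for a well-formed layer the comparators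
   act on disjoint channels, so applying them in sequence is the same as
   applying them in parallel) *)
Definition apply_comparator n (c : comparator n) (x : {ffun 'I_n -> bool})
  : {ffun 'I_n -> bool} :=
  [ffun k => if k == c.1 then x c.1 && x c.2
             else if k == c.2 then x c.1 || x c.2
             else x k].

Definition apply_layer n (L : layer n) (x : {ffun 'I_n -> bool}) :=
  foldl (fun y c => apply_comparator c y) x L.

Definition run n (C : network n) (x : {ffun 'I_n -> bool}) :=
  foldl (fun y L => apply_layer L y) x C.

Definition sorted01 n (x : {ffun 'I_n -> bool}) : bool :=
  [forall i : 'I_n, forall j : 'I_n, ((i <= j)%N) ==> (x i <= x j)].

Definition sorting_network n (C : network n) : Prop :=
  wf_network C /\ forall x : {ffun 'I_n -> bool}, sorted01 (run C x).

(* Main.v *)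
Require Import Defs.
From mathcomp Require Import all_boot zify.
Set Implicit Arguments. Unset Strict Implicit. Unset Printing Implicit Defensive.

Lemma card_geq n (m : nat) : #|[set k : 'I_n | m <= k]| = n - m.
Proof.
rewrite cardsE cardE /enum_mem size_filter -enumT.
rewrite (eq_count (a2 := preim val (fun k : nat => m <= k))); last first.
  by move=> k /=; rewrite unfold_in.
rewrite -count_map val_enum_ord.
have [mn|nm] := leqP m n.
  rewrite -(subnKC mn) iotaD count_cat add0n.
  rewrite (eq_in_count (a2 := pred0)); last by move=> k; rewrite mem_iota /=; lia.
  rewrite count_pred0 add0n (eq_in_count (a2 := predT)); last by move=> k; rewrite mem_iota /=; lia.
  by rewrite count_predT size_iota; lia.
rewrite (eq_in_count (a2 := pred0)); last by move=> k; rewrite mem_iota /=; lia.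
by rewrite count_pred0; lia.
Qed.


Definition upd n (x : {ffun 'I_n -> bool}) (r : 'I_n) (b : bool) : {ffun 'I_n -> bool} :=
  [ffun k => if k == r then b else x k].
Definition cnt n (x : {ffun 'I_n -> bool}) := #|[set k | x k]|.
Definition svec n (c : nat) : {ffun 'I_n -> bool} := [ffun k : 'I_n => n - c <= k].

Lemma cnt_le n (x : {ffun 'I_n -> bool}) : cnt x <= n.
Proof. by rewrite /cnt -[n in _ <= n]card_ord max_card. Qed.

Lemma cnt_svec n c : c <= n -> cnt (svec n c) = c.
Proof.
move=> cn; rewrite /cnt.
have -> : [set k | svec n c k] = [set k : 'I_n | n - c <= k] by apply/setP=> k; rewrite !inE ffunE.
rewrite card_geq; lia.
Qed.

Lemma cnt_upd n (x : {ffun 'I_n -> bool}) r : x r = false -> cnt (upd x r true) = (cnt x).+1.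
Proof.
move=> xr; rewrite /cnt.
have -> : [set k | upd x r true k] = r |: [set k | x k].
  by apply/setP=> k; rewrite !inE ffunE; case: eqP.
by rewrite cardsU1 inE xr.
Qed.

Lemma upd_id n (x : {ffun 'I_n -> bool}) r b : x r = b -> upd x r b = x.
Proof. by move=> xr; apply/ffunP=> k; rewrite ffunE; case: eqP => // ->. Qed.

Lemma upd_upd n (x : {ffun 'I_n -> bool}) r b b' : upd (upd x r b) r b' = upd x r b'.
Proof. by apply/ffunP=> k; rewrite !ffunE; case: eqP. Qed.

Lemma upd_comm n (x : {ffun 'I_n -> bool}) r s b b' : r != s ->
  upd (upd x r b) s b' = upd (upd x s b') r b.
Proof.
move=> rs; apply/ffunP=> k; rewrite !ffunE.
case: (eqVneq k r) => [->|kr]; last by [].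
by rewrite (negbTE rs).
Qed.

Lemma nofire n (c : comparator n) (x : {ffun 'I_n -> bool}) : x c.1 <= x c.2 -> apply_comparator c x = x.
Proof.
case: c => a b /= h; apply/ffunP=> k; rewrite ffunE.
case: eqP => [->|_]; first by case: (x a) h; case: (x b).
case: eqP => [->|_] //; by case: (x a) h; case: (x b).
Qed.

Definition tokP n (f : {ffun 'I_n -> bool} -> {ffun 'I_n -> bool}) :=
  forall (x : {ffun 'I_n -> bool}) r, x r = false -> exists r', f x r' = false /\ f (upd x r true) = upd (f x) r' true.

Ltac crush := rewrite /= ?eqxx //=; repeat (match goal with
  | H : is_true (?u != ?u) |- _ => by rewrite eqxx in H
  | |- context [?u == ?v] => case: (eqVneq u v) => [?|?]; try subst; rewrite /= ?eqxx //=
  end).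

Lemma tok_comp n (c : comparator n) : c.1 != c.2 -> tokP (apply_comparator c).
Proof.
case: c => a b /= ab x r xr.
have [ra|ra] := eqVneq r a.
  subst r. case Hb: (x b).
    exists a; split; first by rewrite ffunE; crush; rewrite xr.
    by apply/ffunP=> k; rewrite !ffunE; crush; rewrite ?xr ?Hb.
  exists b; split; first by rewrite ffunE; crush; rewrite xr Hb.
  by apply/ffunP=> k; rewrite !ffunE; crush; rewrite ?xr ?Hb.
have [rb|rb] := eqVneq r b.
  subst r. case Ha: (x a).
    exists a; split; first by rewrite ffunE; crush; rewrite xr Ha.
    by apply/ffunP=> k; rewrite !ffunE; crush; rewrite ?xr ?Ha.
  exists b; split; first by rewrite ffunE; crush; rewrite xr Ha.
  by apply/ffunP=> k; rewrite !ffunE; crush; rewrite ?xr ?Ha.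
exists r; split; first by rewrite ffunE; crush.
by apply/ffunP=> k; rewrite !ffunE; crush; rewrite ?xr.
Qed.


Lemma tok_foldl n (T : eqType) (g : T -> {ffun 'I_n -> bool} -> {ffun 'I_n -> bool}) s :
  (forall t, t \in s -> tokP (g t)) -> tokP (fun x => foldl (fun y t => g t y) x s).
Proof.
elim: s => [|t s IH] H x r xr /=.
  by exists r.
have [r1 [h1 ->]] := H t (mem_head _ _) x r xr.
apply: (IH _ _ r1 h1) => u us; apply: H; by rewrite inE us orbT.
Qed.

Definition zero n : {ffun 'I_n -> bool} := [ffun => false].

Lemma zero_foldl n (T : eqType) (g : T -> {ffun 'I_n -> bool} -> {ffun 'I_n -> bool}) s :
  (forall t, g t (zero n) = zero n) -> foldl (fun y t => g t y) (zero n) s = zero n.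
Proof. by move=> H; elim: s => //= t s IH; rewrite H. Qed.

Lemma comp_zero n (c : comparator n) : apply_comparator c (zero n) = zero n.
Proof. by apply/ffunP=> k; rewrite !ffunE; case: ifP => _ //; case: ifP. Qed.

Lemma layer_zero n (L : layer n) : apply_layer L (zero n) = zero n.
Proof. exact: zero_foldl (@comp_zero n). Qed.

Lemma run_zero n (C : network n) : run C (zero n) = zero n.
Proof. exact: zero_foldl (@layer_zero n). Qed.

Lemma tok_layer n (L : layer n) : all (fun c : comparator n => c.1 < c.2) L -> tokP (apply_layer L).
Proof.
move/allP=> H; apply: tok_foldl => c /H lt; apply: tok_comp.
by rewrite neq_ltn lt.
Qed.

Lemma tok_run n (C : network n) : wf_network C -> tokP (run C).
Proof.
move/allP=> H; apply: tok_foldl => L /H; rewrite /wf_layer => /andP[h _].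
exact: tok_layer.
Qed.

Lemma cnt_pres n (f : {ffun 'I_n -> bool} -> {ffun 'I_n -> bool}) :
  tokP f -> f (zero n) = zero n -> forall x, cnt (f x) = cnt x.
Proof.
move=> tf f0 x; move Ex: (cnt x) => k; elim: k x Ex => [|k IH] x Ex.
  have -> : x = zero n.
    apply/ffunP=> t; rewrite ffunE; apply/negbTE/negP=> xt.
    have : t \in [set u | x u] by rewrite inE.
    by move/cards0_eq: Ex => ->; rewrite inE.
  rewrite f0; apply/eqP; rewrite cards_eq0; apply/eqP/setP=> t; by rewrite !inE ffunE.
have : 0 < cnt x by rewrite Ex.
rewrite /cnt card_gt0 => /set0Pn [r]; rewrite inE => xr.
set x0 := upd x r false.
have x0r : x0 r = false by rewrite ffunE eqxx.
have ex : x = upd x0 r true by rewrite upd_upd upd_id.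
clearbody x0.
have c0 : cnt x0 = k by have := cnt_upd x0r; rewrite -ex Ex => -[].
have [r' [h1 h2]] := tf x0 r x0r.
by rewrite ex h2 -/(cnt (upd (f x0) r' true)) cnt_upd // IH.
Qed.

Lemma sorted_svec n (y : {ffun 'I_n -> bool}) : sorted01 y -> y = svec n (cnt y).
Proof.
move=> Hs; apply/ffunP=> k; rewrite ffunE.
have Hy : forall i j : 'I_n, i <= j -> y i <= y j.
  by move=> i j ij; move/forallP: Hs => /(_ i) /forallP /(_ j) /implyP; apply.
have kn := ltn_ord k.
case yk: (y k).
  have : [set k' : 'I_n | k <= k'] \subset [set t | y t].
    apply/subsetP=> t; rewrite !inE => kt; by move: (Hy _ _ kt); rewrite yk; case: (y t).
  move/subset_leq_card; rewrite card_geq -/(cnt y) => h.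
  apply/esym; lia.
have : [set t | y t] \subset [set k' : 'I_n | k.+1 <= k'].
  apply/subsetP=> t; rewrite !inE => yt; rewrite ltnNge; apply/negP => tk.
  by have := Hy _ _ tk; rewrite yt yk.
move/subset_leq_card; rewrite card_geq -/(cnt y) => h.
apply/esym/negbTE; rewrite -ltnNge; lia.
Qed.


Definition chans n (L : layer n) := flatten [seq [:: c.1; c.2] | c : comparator n <- L].

Lemma chans_cat n (L1 L2 : layer n) : chans (L1 ++ L2) = chans L1 ++ chans L2.
Proof. by rewrite /chans map_cat flatten_cat. Qed.

Lemma chans_cons n (c : comparator n) L : chans (c :: L) = c.1 :: c.2 :: chans L.
Proof. by []. Qed.

Lemma layer_notin n (L : layer n) u k : k \notin chans L -> apply_layer L u k = u k.
Proof.
elim: L u => //= c L IH u; rewrite chans_cons !inE !negb_or => /and3P [k1 k2 kL].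
rewrite /apply_layer /= -/(apply_layer L _) IH // ffunE (negbTE k1) (negbTE k2) //.
Qed.

Lemma layer_at n (L : layer n) (i j : 'I_n) u : wf_layer L -> (i, j) \in L ->
  apply_layer L u i = u i && u j /\ apply_layer L u j = u i || u j.
Proof.
case/andP=> _ U Hin; move: U; case/splitPr: Hin => La Lb.
rewrite -/(chans _) chans_cat chans_cons cat_uniq /= !inE !negb_or.
case/and5P=> _ /and3P [iLa jLa _] /andP [ij iLb] jLb _.
rewrite /apply_layer foldl_cat /= -!/(apply_layer _ _) !layer_notin //.
by rewrite !ffunE /= eqxx !layer_notin // eq_sym (negbTE ij) eqxx.
Qed.

Lemma fix_foldl n (T : eqType) (g : T -> {ffun 'I_n -> bool} -> {ffun 'I_n -> bool}) s v :
  (forall t, t \in s -> g t v = v) -> foldl (fun y t => g t y) v s = v.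
Proof.
elim: s => //= t s IH H; rewrite H ?mem_head // IH // => u us; apply: H.
by rewrite inE us orbT.
Qed.

Lemma run_svec n (C : network n) c : wf_network C -> run C (svec n c) = svec n c.
Proof.
move/allP=> H; apply: fix_foldl => L /H /andP [/allP H2 _].
apply: fix_foldl => cc /H2 lt; apply: nofire; rewrite !ffunE.
case: leqP => //; case: leqP => //; lia.
Qed.

Section Red.
Variables (n : nat) (C : network n) (L : layer n) (i j : 'I_n).
Hypotheses (wfC : wf_network C) (wfL : wf_layer L)
  (srt : forall x, sorted01 (apply_layer L (run C x))) (ijL : (i, j) \in L) (ij2 : i.+2 <= j).

Let w x := run C x.
Let F x := w x i && ~~ w x j.

Lemma HO x : apply_layer L (w x) = svec n (cnt x).
Proof.
rewrite [LHS]sorted_svec // (cnt_pres (tok_layer _) (layer_zero L)); last by case/andP: wfL.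
by rewrite (cnt_pres (tok_run wfC) (run_zero C)).
Qed.

Lemma band x : F x -> i < n - cnt x /\ n - cnt x <= j.
Proof.
case/andP=> h1 h2; have [Hi Hj] := layer_at (w x) wfL ijL.
move: Hi Hj; rewrite HO !ffunE h1 (negbTE h2) /= => Hi Hj.
by split; [rewrite ltnNge Hi | rewrite Hj].
Qed.

Lemma up x p : F x -> x p = false -> i < n - (cnt x).+1 -> F (upd x p true).
Proof.
move=> Fx xp h.
have [r [wr e]] := tok_run wfC xp.
case/andP: Fx => h1 h2.
have Hi := (layer_at (w (upd x p true)) wfL ijL).1.
move: Hi; rewrite HO cnt_upd // ffunE.
rewrite /F /w e !ffunE -/(w x) h1.
case: (eqVneq i r) => [ir|ir]; first by rewrite -ir h1 in wr.
case: (eqVneq j r) => [jr|jr] /=; last by rewrite (negbTE h2).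
by move=> /esym; rewrite -[_ <= _]negbK -ltnNge h.
Qed.

Lemma down x p : F x -> x p = true -> n - (cnt x).-1 <= j -> F (upd x p false).
Proof.
move=> Fx xp h.
set x0 := upd x p false.
have x0p : x0 p = false by rewrite ffunE eqxx.
have ex : x = upd x0 p true by rewrite upd_upd upd_id.
clearbody x0.
have c0 : cnt x0 = (cnt x).-1 by rewrite ex cnt_upd.
have [r [wr e]] := tok_run wfC x0p.
move: Fx; rewrite /F /w ex e -/(w x0) !ffunE => /andP [h1 h2].
have Hj := (layer_at (w x0) wfL ijL).2.
move: Hj; rewrite HO c0 ffunE h.
case: (eqVneq j r) h2 => [->|jr] //= h2.
case: (eqVneq i r) h1 => [ir|ir] /= h1.
  by rewrite /w -ir in wr; rewrite wr (negbTE h2).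
by rewrite h1.
Qed.

Lemma swap x p q : F x -> x p = true -> x q = false -> F (upd (upd x p false) q true).
Proof.
move=> Fx xp xq.
have pq : p != q by apply/eqP=> e; rewrite e xq in xp.
have [b1 b2] := band Fx.
have cn := cnt_le x.
have c1 : 0 < cnt x.
  rewrite /cnt card_gt0; apply/set0Pn; exists p; by rewrite inE.
case: (ltnP i (n - (cnt x).+1)) => h.
  have F1 := up Fx xq h.
  rewrite upd_comm //.
  apply: down => //; first by rewrite ffunE (negbTE pq).
  rewrite cnt_upd //; lia.
have F1 := down Fx xp (ltac:(lia)).
apply: up => //; first by rewrite ffunE eq_sym (negbTE pq).
have : cnt x = (cnt (upd x p false)).+1.
  have e0 : (upd x p false) p = false by rewrite ffunE eqxx.
  by rewrite -(cnt_upd e0) upd_upd upd_id.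
lia.
Qed.

Lemma allF x y : F x -> cnt y = cnt x -> F y.
Proof.
move Ek: #|[set t | x t && ~~ y t]| => k.
elim: k x Ek => [|k IH] x Ek Fx cxy.
  have sub : [set t | x t] \subset [set t | y t].
    apply/subsetP=> t; rewrite !inE => xt; apply/negPn/negP => yt.
    have : t \in [set t | x t && ~~ y t] by rewrite inE xt yt.
    by move/cards0_eq: Ek => ->; rewrite inE.
  have E : [set t | x t] = [set t | y t].
    by apply/eqP; rewrite eqEcard sub /= -/(cnt x) -/(cnt y) cxy.
  have -> : y = x by apply/ffunP=> t; move/setP: E => /(_ t); rewrite !inE => ->.
  by [].
have : 0 < k.+1 by [].
rewrite -Ek card_gt0 => /set0Pn [p]; rewrite inE => /andP [xp yp].
have [q /andP [xq yq]] : exists q, ~~ x q && y q.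
  case: (boolP [exists q, ~~ x q && y q]) => [/existsP //|]; rewrite negb_exists => /forallP H; exfalso.
  have sub : [set t | y t] \proper [set t | x t].
    apply/properP; split.
      apply/subsetP=> t; rewrite !inE => yt; move: (H t); by rewrite yt andbT negbK.
    by exists p; rewrite inE ?xp // (negbTE yp).
  by move/proper_card: sub; rewrite -/(cnt x) -/(cnt y) cxy ltnn.
have pq : p != q by apply/eqP=> e; rewrite e (negbTE xq) in xp.
apply: (IH (upd (upd x p false) q true)).
- have -> : [set t | upd (upd x p false) q true t && ~~ y t] = [set t | x t && ~~ y t] :\ p.
    apply/setP=> t; rewrite !inE !ffunE.
    case: (eqVneq t q) => [->|tq]; first by rewrite yq /= !andbF.
    case: (eqVneq t p) => [->|tp] //=.
  by have := cardsD1 p [set t | x t && ~~ y t]; rewrite Ek inE xp yp /= add1n => -[].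
- by apply: swap => //; apply: negbTE.
- rewrite cnt_upd; last by rewrite ffunE eq_sym (negbTE pq) (negbTE xq).
  rewrite cxy; have e0 : (upd x p false) p = false by rewrite ffunE eqxx.
  by rewrite -(cnt_upd e0) upd_upd upd_id.
Qed.

Lemma noF x : ~~ F x.
Proof.
apply/negP=> Fx.
have [b1 b2] := band Fx.
have Fs := allF Fx (cnt_svec (cnt_le x)).
move: Fs; rewrite /F /w run_svec // ffunE.
by rewrite leqNgt b1.
Qed.
End Red.

Lemma redundant n (C : network n) (L : layer n) (i j : 'I_n) :
  wf_network C -> wf_layer L -> (forall x, sorted01 (apply_layer L (run C x))) ->
  (i, j) \in L -> i.+2 <= j -> forall x, run C x i <= run C x j.
Proof.
move=> wfC wfL srt ijL ij2 x.
have := noF wfC wfL srt ijL ij2 x.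
by case: (run C x i); case: (run C x j).
Qed.


Lemma used_chans n (L : layer n) x : used L x = (x \in chans L).
Proof.
elim: L => //= c L IH; rewrite chans_cons !inE IH orbA; congr (_ || _).
by rewrite ![x == _]eq_sym.
Qed.

Lemma mem_chans n (L : layer n) c : c \in L -> (c.1 \in chans L) && (c.2 \in chans L).
Proof.
by move=> cL; apply/andP; split; apply/flatten_mapP; exists c => //; rewrite !inE eqxx ?orbT.
Qed.

Lemma chans_filter n (P : pred (comparator n)) (L : layer n) : subseq (chans (filter P L)) (chans L).
Proof.
elim: L => // c L IH; rewrite chans_cons [filter P (c :: L)]/=; case: (P c).
  by rewrite chans_cons /= !eqxx.
apply: (subseq_trans IH); apply: (subseq_trans (subseq_cons _ c.2)); exact: subseq_cons.
Qed.

Lemma wf_filter n (P : pred (comparator n)) (L : layer n) : wf_layer L -> wf_layer (filter P L).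
Proof.
case/andP=> A U; apply/andP; split.
  by apply/allP=> c; rewrite mem_filter => /andP [_ /(allP A)].
exact: subseq_uniq (chans_filter P L) U.
Qed.

Lemma filter_layer n (P : pred (comparator n)) (L : layer n) (u : {ffun 'I_n -> bool}) :
  uniq (chans L) -> (forall c, c \in L -> ~~ P c -> u c.1 <= u c.2) ->
  apply_layer (filter P L) u = apply_layer L u.
Proof.
elim: L u => // c L IH u; rewrite [filter P (c :: L)]/= chans_cons /= !inE negb_or => /andP [/andP [c12 c1L] /andP [c2L U]] H.
case: ifP => Pc.
  rewrite /apply_layer /= -!/(apply_layer _ _); apply: IH => // c' c'L nP.
  have /andP [h1 h2] := mem_chans c'L.
  rewrite !ffunE.
  have ne : forall z, z \in chans L -> (z == c.1) = false /\ (z == c.2) = false.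
    move=> z zL; split; apply/negbTE/eqP => e; subst z.
      by rewrite zL in c1L.
    by rewrite zL in c2L.
  have [-> ->] := ne _ h1; have [-> ->] := ne _ h2.
  by apply: H => //; rewrite inE c'L orbT.
rewrite /apply_layer /= -!/(apply_layer _ _) (nofire (H c (mem_head _ _) (negbT Pc))).
by apply: IH => // c' c'L; apply: H; rewrite inE c'L orbT.
Qed.


Definition step n (L : layer n) (k : nat) : layer n :=
  if insub k is Some a then
    if insub k.+1 is Some b then
      if ~~ used L a && ~~ used L b then rcons L (a, b) else L
    else L
  else L.

Definition fill n (L : layer n) : layer n := foldl (@step n) L (iota 0 n).

Lemma step_cases n (L : layer n) k :
  step L k = L \/ exists a b : 'I_n, [/\ val a = k, val b = k.+1, ~~ used L a, ~~ used L b &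
                                     step L k = rcons L (a, b)].
Proof.
rewrite /step; case: insubP => [a _ va|_]; last by left.
case: insubP => [b _ vb|_]; last by left.
case: ifP => [/andP [ua ub]|_]; last by left.
by right; exists a, b; split.
Qed.

Lemma fill_ind n (Q : layer n -> Prop) L s :
  Q L -> (forall L k, Q L -> Q (step L k)) -> Q (foldl (@step n) L s).
Proof. by elim: s L => //= k s IH L QL H; apply: IH => //; apply: H. Qed.

Lemma step_adj n (L : layer n) k :
  (forall c, c \in L -> val c.2 = (val c.1).+1) ->
  forall c, c \in step L k -> val c.2 = (val c.1).+1.
Proof.
move=> H c; case: (step_cases L k) => [->|[a [b [va vb _ _ ->]]]]; first exact: H.
rewrite mem_rcons inE => /orP [/eqP -> /=|]; [by rewrite va vb | exact: H].
Qed.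

Lemma step_wf n (L : layer n) k : wf_layer L -> wf_layer (step L k).
Proof.
move=> wf; case: (step_cases L k) => [->|[a [b [va vb ua ub ->]]]] //.
case/andP: wf => A U; apply/andP; split.
  by rewrite all_rcons A andbT /= va vb.
rewrite -cats1 -/(chans _) chans_cat cat_uniq U /= !inE orbF -!used_chans.
rewrite (negbTE ua) (negbTE ub) /= andbT.
apply/negP => /eqP e; by move: vb; rewrite -e va; lia.
Qed.

Lemma step_used n (L : layer n) k x : used L x -> used (step L k) x.
Proof.
case: (step_cases L k) => [->|[a [b [va vb ua ub ->]]]] //.
by rewrite /used -cats1 has_cat => ->.
Qed.

Lemma fill_used n (L : layer n) s x : used L x -> used (foldl (@step n) L s) x.
Proof. by elim: s L => //= k s IH L h; apply: IH; apply: step_used. Qed.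

Lemma fill_cover n s (L : layer n) (a b : 'I_n) : val b = (val a).+1 -> val a \in s ->
  used (foldl (@step n) L s) a || used (foldl (@step n) L s) b.
Proof.
move=> ab; elim: s L => //= k s IH L; rewrite inE => /orP [/eqP ak|]; last exact: IH.
suff : used (step L k) a || used (step L k) b.
  by case/orP => h; [rewrite (fill_used s h) | rewrite (fill_used s h) orbT].
rewrite /step; case: insubP => [a' _ va'|]; last by rewrite -ak ltn_ord.
case: insubP => [b' _ vb'|]; last by rewrite -ak -ab ltn_ord.
have ea : a' = a by apply: val_inj => /=; rewrite va'; lia.
have eb : b' = b by apply: val_inj => /=; rewrite vb' ab -ak.
subst a' b'.
case: ifP => [_|]; last by case: (used L a); case: (used L b).
by rewrite /used -cats1 has_cat /= eqxx /= !orbT.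
Qed.

Lemma fill_apply n (L : layer n) s u : sorted01 (apply_layer L u) ->
  apply_layer (foldl (@step n) L s) u = apply_layer L u.
Proof.
elim: s L => //= k s IH L h.
have e : apply_layer (step L k) u = apply_layer L u.
  case: (step_cases L k) => [->|[a [b [va vb _ _ ->]]]] //.
  rewrite /apply_layer foldl_rcons -/(apply_layer _ _); apply: nofire => /=.
  move/forallP: h => /(_ a) /forallP /(_ b) /implyP; apply; by rewrite va vb.
by rewrite IH e.
Qed.


Unset Implicit Arguments.
Theorem lemma6 (n d : nat) (C : network n) :
  sorting_network C -> depth C = d ->
  exists N : network n,
    [/\ sorting_network N, depth N = d &
        forall Ld : layer n, last [::] N = Ld ->
        (forall c, c \in Ld -> c.2 = c.1.+1 :> nat) /\
        ~ (exists i j : 'I_n, j = i.+1 :> nat /\ ~~ used Ld i /\ ~~ used Ld j)].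
Proof.
move=> [wfC srtC] <-.
case/lastP: C wfC srtC => [|C' L] wfC srtC.
  exists [::]; split => //.
  move=> Ld <-; split => //; case=> i [j [ji _]].
  have := srtC [ffun k => k == i]; rewrite /run /= => /forallP /(_ i) /forallP /(_ j).
  rewrite !ffunE eqxx ji leqnSn /=.
  have -> : (j == i) = false by apply/negbTE/eqP => e; move: ji; rewrite e; lia.
  by [].
move: wfC; rewrite /wf_network all_rcons => /andP [wfL wfC'].
have runE : forall D (K : layer n) x, run (rcons D K) x = apply_layer K (run D x).
  by move=> *; rewrite /run foldl_rcons.
have srt : forall x, sorted01 (apply_layer L (run C' x)) by move=> x; rewrite -runE.
pose P := fun c : comparator n => val c.2 == (val c.1).+1.
pose L1 := filter P L.
have eq1 : forall x, apply_layer L1 (run C' x) = apply_layer L (run C' x).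
  move=> x; apply: filter_layer; first by case/andP: wfL.
  move=> [a b] abL; rewrite /P /= => /eqP nadj.
  apply: (redundant wfC' wfL srt abL).
  have := (allP (proj1 (andP wfL))) _ abL; rewrite /=; lia.
pose L2 := foldl (@step n) L1 (iota 0 n).
exists (rcons C' L2); split.
- split.
    rewrite /wf_network all_rcons wfC' andbT.
    by apply: (fill_ind (Q := @wf_layer n)); [exact: wf_filter | move=> *; exact: step_wf].
  by move=> x; rewrite runE fill_apply eq1.
- by rewrite /depth !size_rcons.
- move=> Ld; rewrite last_rcons => <-; split.
    apply: (fill_ind (Q := fun K : layer n => forall c, c \in K -> val c.2 = (val c.1).+1)).
      by move=> c; rewrite mem_filter => /andP [/eqP].
    move=> K k; exact: step_adj.
  case=> i [j [ji [ui uj]]].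
  have := fill_cover L1 ji (_ : val i \in iota 0 n).
  by rewrite (negbTE ui) (negbTE uj) mem_iota ltn_ord => /(_ isT).
Qed.
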